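(* Let $F$ be a fixed connected graph. Then, as $n\to\infty$, $$\binom{n}{2}\le L(n,F)+\mathrm{exa}_1(n,F)\le \binom{n}{2}+O(n).$$ Consequently, if $F$ is not a tree, then $L(n,F)=\binom{n}{2}-(1+o(1))\,\mathrm{ex}(n,F)$.
   Context: $\mathrm{exa}_1(n,F)$ is the largest number of edges of a simple graph on $n$ vertices containing exactly one subgraph isomorphic to $F$; $\mathrm{ex}(n,F)$ is the largest number of edges of a graph on $n$ vertices containing no subgraph isomorphic to $F$. Search game: given a vertex set $V$ with $|V|=n$, an unknown edge set $E_0$ of pairs from $V$ is hidden such that the graph $(V,E_0)$ is isomorphic to $F$ together with $n-|V(F)|$ isolated vertices. A query is a pair of vertices of $V$, answered YES if it belongs to $E_0$ and NO otherwise; queries may be chosen adaptively. The game ends when $E_0$ is determined, i.e. exactly one such edge set is consistent with all answers. $L(n,F)$ is the minimum, over all questioning strategies, of the maximum over all possible $E_0$ of the number of queries asked. *)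

(* Defs.v *)
From mathcomp Require Import all_boot all_order all_algebra.
From Stdlib Require Import ClassicalEpsilon.
Set Implicit Arguments. Unset Strict Implicit. Unset Printing Implicit Defensive.

(* The fixed graph F: vertex set 'I_k, adjacency Fadj (assumed symmetric and
   irreflexive in the theorem). *)

Definition connected_graph (k : nat) (Fadj : rel 'I_k) : Prop :=
  forall x y : 'I_k, connect Fadj x y.

Definition is_tree (k : nat) (Fadj : rel 'I_k) : Prop :=
  connected_graph Fadj /\
  ~ (exists s : seq 'I_k, [/\ uniq s, 3 <= size s & cycle Fadj s]).

(* A simple graph on 'I_n is an edge set: a set of 2-element subsets. *)
Definition simpleb (n : nat) (G : {set {set 'I_n}}) : bool :=
  [forall e in G, #|e| == 2].

Definition embed (k n : nat) (Fadj : rel 'I_k) (f : 'I_k -> 'I_n)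
  : {set {set 'I_n}} :=
  [set [set f x.1; f x.2] | x in [set p : 'I_k * 'I_k | Fadj p.1 p.2]].

(* Edge sets E0 on 'I_n such that ('I_n, E0) is isomorphic to F plus
   n - |V(F)| isolated vertices, i.e. E0 is the image of E(F) under an
   injection V(F) -> 'I_n. *)
Definition hyp (k n : nat) (Fadj : rel 'I_k) : {set {set {set 'I_n}}} :=
  [set E | [exists f : {ffun 'I_k -> 'I_n}, injectiveb f && (E == embed Fadj f)]].

(* The copies of F in G (F connected without isolated vertices, so a
   subgraph isomorphic to F is determined by its edge set). *)
Definition copies (k n : nat) (Fadj : rel 'I_k) (G : {set {set 'I_n}})
  : {set {set {set 'I_n}}} :=
  [set E in hyp n Fadj | E \subset G].

Definition ex (k : nat) (Fadj : rel 'I_k) (n : nat) : nat :=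
  \max_(G : {set {set 'I_n}} | simpleb G && (copies Fadj G == set0)) #|G|.

Definition exa1 (k : nat) (Fadj : rel 'I_k) (n : nat) : nat :=
  \max_(G : {set {set 'I_n}} | simpleb G && (#|copies Fadj G| == 1)) #|G|.

(* Adaptive questioning strategies = binary decision trees: at a node
   [Ask q ty tn] the pair q is queried; continue with ty on YES, tn on NO. *)
Inductive strategy (n : nat) : Type :=
  | Stop : strategy n
  | Ask : {set 'I_n} -> strategy n -> strategy n -> strategy n.

Fixpoint queries_are_pairs (n : nat) (t : strategy n) : bool :=
  match t with
  | Stop => true
  | Ask q ty tn => [&& #|q| == 2, queries_are_pairs ty & queries_are_pairs tn]
  end.

Fixpoint transcript (n : nat) (t : strategy n) (E : {set {set 'I_n}})
  : seq ({set 'I_n} * bool) :=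
  match t with
  | Stop => [::]
  | Ask q ty tn =>
      let b := q \in E in (q, b) :: transcript (if b then ty else tn) E
  end.

(* A strategy wins if, whenever it stops, exactly one admissible E0 is
   consistent with all answers (two admissible sets are consistent with the
   same answers iff they produce the same transcript). *)
Definition determines (k n : nat) (Fadj : rel 'I_k) (t : strategy n) : Prop :=
  queries_are_pairs t /\
  forall E E', E \in hyp n Fadj -> E' \in hyp n Fadj ->
    transcript t E = transcript t E' -> E = E'.

Definition achievable (k : nat) (Fadj : rel 'I_k) (n d : nat) : Prop :=
  exists t : strategy n, determines Fadj t /\
    forall E, E \in hyp n Fadj -> size (transcript t E) <= d.

Definition L (k : nat) (Fadj : rel 'I_k) (n : nat) : nat :=
  epsilon (inhabits 0%N)
    (fun d => achievable Fadj n d /\ forall d', achievable Fadj n d' -> d <= d').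

(* Main.v *)
Require Import Defs.
From mathcomp Require Import all_boot all_order all_algebra.
From mathcomp Require Import zify ring lra.
From Stdlib Require Import ClassicalEpsilon Classical.
Set Implicit Arguments. Unset Strict Implicit. Unset Printing Implicit Defensive.

Lemma embed_pair (k n : nat) (Fadj : rel 'I_k) (f : 'I_k -> 'I_n) e :
  irreflexive Fadj -> injective f -> e \in embed Fadj f -> #|e| = 2.
Proof.
move=> irr injf /imsetP [[a b]]; rewrite inE /= => Hab ->.
rewrite cards2 (inj_eq injf); case: eqP => // Eab.
by move: Hab; rewrite Eab irr.
Qed.

Lemma hypP (k n : nat) (Fadj : rel 'I_k) E :
  reflect (exists f : {ffun 'I_k -> 'I_n}, injective f /\ E = embed Fadj f)
          (E \in hyp n Fadj).
Proof.
rewrite inE; apply: (iffP existsP) => [[f /andP [/injectiveP If /eqP ->]]|[f [If ->]]].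
  by exists f.
by exists f; rewrite eqxx andbT; apply/injectiveP.
Qed.

Lemma hyp_pair (k n : nat) (Fadj : rel 'I_k) E e :
  irreflexive Fadj -> E \in hyp n Fadj -> e \in E -> #|e| = 2.
Proof. by move=> irr /hypP [f [If ->]]; apply: embed_pair. Qed.

Lemma adversary n (t : strategy n) (S : {set {set {set 'I_n}}}) :
  S != set0 -> {in S &, forall E E', transcript t E = transcript t E' -> E = E'} ->
  exists2 E0, E0 \in S & exists N : {set {set 'I_n}},
    [/\ #|N| <= size (transcript t E0), {in E0, forall x, x \notin N} &
        {in S, forall E : {set {set 'I_n}}, {in E, forall x, x \notin N} -> E = E0}].
Proof.
elim: t S => [|q ty IHy tn IHn] S /set0Pn [E1 E1S] det.
  exists E1 => //; exists set0; split; rewrite ?cards0 //.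
    by move=> x; rewrite inE.
  by move=> E ES _; apply: det.
case: (boolP [forall E in S, q \in E]) => [/forall_inP allq|].
  have [| |E0 E0S [N [c1 c2 c3]]] := IHy S.
  - by apply/set0Pn; exists E1.
  - move=> E E' ES ES' /= Et; apply: det => //=.
    by rewrite (allq _ ES) (allq _ ES') Et.
  exists E0 => //; exists N; split => //=.
  by rewrite (allq _ E0S) /=; apply: leqW.
rewrite negb_forall_in => /existsP [E2 /andP [E2S qE2]].
pose S' := [set E in S | q \notin E].
have [| |E0 E0S' [N [c1 c2 c3]]] := IHn S'.
- by apply/set0Pn; exists E2; rewrite inE E2S.
- move=> E E'; rewrite !inE => /andP [ES qE] /andP [ES' qE'] /= Et.
  by apply: det => //=; rewrite (negbTE qE) (negbTE qE') Et.
move: (E0S'); rewrite inE => /andP [E0S qE0].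
exists E0 => //; exists (q |: N); split.
- rewrite /= (negbTE qE0) /= cardsU1; case: (q \in N); lia.
- move=> x xE0; rewrite !inE negb_or c2 // andbT.
  by apply/eqP => xq; rewrite -xq xE0 in qE0.
- move=> E ES HE; apply: c3.
    rewrite inE ES /=; apply/negP => qE.
    by move: (HE q qE); rewrite setU11.
  by move=> x xE; move: (HE x xE); rewrite inE negb_or => /andP [].
Qed.

Lemma part1 (k n : nat) (Fadj : rel 'I_k) d :
  irreflexive Fadj -> k <= n -> achievable Fadj n d -> 'C(n, 2) <= d + exa1 Fadj n.
Proof.
move=> irr kn [t [[_ det] bnd]].
have [|E0 E0S [N [c1 c2 c3]]] := adversary (S := hyp n Fadj) _ det.
  apply/set0Pn; exists (embed Fadj [ffun i => widen_ord kn i]).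
  apply/hypP; exists [ffun i => widen_ord kn i]; split => //.
  by move=> i j; rewrite !ffunE => /(congr1 val) /= /val_inj.
pose G := [set q : {set 'I_n} | #|q| == 2] :\: N.
have cG : copies Fadj G = [set E0].
  apply/setP => E; rewrite /copies in_set in_set1; apply/andP/eqP => [[EH /subsetP EG]|->].
    apply: c3 => // x /EG; rewrite inE => /andP [] //.
  split => //; apply/subsetP => x xE0; rewrite !inE c2 //=.
  by rewrite (hyp_pair irr E0S xE0).
have Gs : simpleb G by apply/forall_inP => x; rewrite !inE => /andP [].
have h1 : #|G| <= exa1 Fadj n.
  rewrite /exa1; apply: leq_bigmax_cond.
  by rewrite Gs cG cards1.
have h2 : 'C(n, 2) <= #|G| + #|N|.
  rewrite cardsD card_draws card_ord.
  have := subset_leq_card (subsetIr [set q : {set 'I_n} | #|q| == 2] N).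
  have : #|[set q : {set 'I_n} | #|q| == 2] :&: N| <= #|[set q : {set 'I_n} | #|q| == 2]|.
    exact/subset_leq_card/subsetIl.
  rewrite card_draws card_ord.
  move=> h h'; rewrite -{1}(subnK h) leq_add2l //.
have := bnd E0 E0S; lia.
Qed.

Section Strat.
Variable n : nat.
Variable G : {set {set 'I_n}}.

Definition Kset (h : seq ({set 'I_n} * bool)) : {set 'I_n} :=
  [set x : 'I_n | has (fun p : {set 'I_n} * bool => p.2 && (x \in p.1)) h].

Definition meets (q K : {set 'I_n}) : bool := [exists x, (x \in q) && (x \in K)].

Definition cnd (h : seq ({set 'I_n} * bool)) (q : {set 'I_n}) : bool :=
  [&& #|q| == 2, q \notin map fst h &
      (if Kset h == set0 then q \notin G else meets q (Kset h))].

Definition pol h := [pick q | cnd h q].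

Fixpoint build (f : nat) h : strategy n :=
  match f with
  | 0 => Stop n
  | f'.+1 => match pol h with
             | None => Stop n
             | Some q => Ask q (build f' (rcons h (q, true))) (build f' (rcons h (q, false)))
             end
  end.

Lemma transcript_build f h E :
  transcript (build f.+1 h) E =
  if pol h is Some q then (q, q \in E) :: transcript (build f (rcons h (q, q \in E))) E
  else [::].
Proof. by rewrite /=; case: (pol h) => // q /=; case: (q \in E). Qed.

Lemma build_pairs f h : queries_are_pairs (build f h).
Proof.
elim: f h => // f IH h /=; rewrite /pol; case: pickP => // q /and3P [q2 _ _].
by rewrite /= q2 !IH.
Qed.

Variable E : {set {set 'I_n}}.
Definition VE : {set 'I_n} := [set x : 'I_n | [exists e in E, x \in e]].

Definition Inv (h : seq ({set 'I_n} * bool)) : bool :=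
  [&& uniq (map fst h), all (fun p : {set 'I_n} * bool => p.2 == (p.1 \in E)) h &
      all (fun q : {set 'I_n} => (#|q| == 2) && ((q \notin G) || meets q VE)) (map fst h)].

Lemma Kset_VE h : all (fun p : {set 'I_n} * bool => p.2 == (p.1 \in E)) h -> Kset h \subset VE.
Proof.
move=> /allP cons; apply/subsetP => x; rewrite !inE => /hasP [p ph /andP [p2 xp]].
apply/existsP; exists p.1; rewrite xp andbT.
by move: (cons p ph) => /eqP <-.
Qed.

Lemma Inv_step h q : Inv h -> cnd h q -> Inv (rcons h (q, q \in E)).
Proof.
move=> /and3P [u c a] /and3P [q2 qn qc].
rewrite /Inv map_rcons rcons_uniq qn u /= all_rcons /= eqxx c /=.
rewrite all_rcons a q2 /= andbT.
move: qc; case: ifP => _; first by move=> ->.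
move=> /existsP [x /andP [xq xK]]; rewrite orbC; apply/orP; left.
apply/existsP; exists x; rewrite xq /=.
by move/subsetP: (Kset_VE c); apply.
Qed.

Lemma run_inv f h : Inv h ->
  let H := h ++ transcript (build f h) E in
  Inv H /\ (#|{set 'I_n}| < f + size h -> pol H = None).
Proof.
elim: f h => [|f IH] h Ih /=.
  rewrite cats0; split => // hc.
  move: Ih => /and3P [u _ _]; move: (card_uniqP u); rewrite size_map => e; rewrite add0n -e in hc.
  by rewrite ltnNge max_card in hc.
rewrite /pol; case: pickP => [q cq|none].
  have := IH _ (Inv_step Ih cq).
  rewrite /= cat_rcons; case: (q \in E) => /=; move=> [H1 H2]; split => // hc;
  apply: H2; rewrite size_rcons addnS //.
rewrite cats0; split => // _; case: pickP => // q; by rewrite none.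
Qed.

End Strat.

Lemma consP n (E : {set {set 'I_n}}) (T : seq ({set 'I_n} * bool)) q :
  all (fun p : {set 'I_n} * bool => p.2 == (p.1 \in E)) T ->
  q \in map fst T -> (q, q \in E) \in T.
Proof.
move=> /allP c /mapP [p pT ->]; move: (c p pT) => /eqP <-.
by case: p pT.
Qed.

Lemma cover k n (Fadj : rel 'I_k) (G E : {set {set 'I_n}}) T :
  irreflexive Fadj -> connected_graph Fadj -> copies Fadj G = set0 ->
  E \in hyp n Fadj -> Inv G E T -> pol G T = None ->
  forall e, e \in E -> e \in map fst T.
Proof.
move=> irr conn cG EH /and3P [u c a] pN.
have none q : ~~ cnd G T q by move: pN; rewrite /pol; case: pickP => // H _; rewrite H.
have yes e : e \in E -> e \in map fst T -> e \subset Kset T.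
  move=> eE eT; apply/subsetP => x xe; rewrite inE; apply/hasP.
  by exists (e, e \in E) => //=; [apply: consP | rewrite eE].
have [K0|Kn0] := eqVneq (Kset T) set0.
  have EG : E \subset G.
    apply/subsetP => e eE; case: (boolP (e \in map fst T)) => eT.
      have := yes e eE eT; rewrite K0 subset0 => /eqP e0.
      by have := hyp_pair irr EH eE; rewrite e0 cards0.
    move: (none e); rewrite /cnd (hyp_pair irr EH eE) eT K0 eqxx /=.
    by rewrite eqxx negbK.
  have : E \in copies Fadj G by rewrite inE EH EG.
  by rewrite cG inE.
have inT e : e \in E -> meets e (Kset T) -> e \in map fst T.
  move=> eE me; apply: contraT => eT; move: (none e).
  by rewrite /cnd (hyp_pair irr EH eE) eT (negbTE Kn0) me.
move: (EH) => /hypP [f [If Ef]]; clear a.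
have fK : exists x0, f x0 \in Kset T.
  case/set0Pn: Kn0 => x xK; move/subsetP: (Kset_VE c) => /(_ x xK).
  rewrite inE => /existsP [e /andP [eE xe]]; move: eE; rewrite Ef /embed.
  case/imsetP => [[a b]] _ ed; move: xe; rewrite ed !inE => /orP [] /eqP xe.
    by exists a; rewrite -xe.
  by exists b; rewrite -xe.
have edgeK a b : f a \in Kset T -> Fadj a b -> [set f a; f b] \in E /\ meets [set f a; f b] (Kset T).
  move=> aK ab; split; first by rewrite Ef /embed; apply/imsetP; exists (a, b); rewrite // inE.
  by apply/existsP; exists (f a); rewrite in_set2 eqxx aK.
case: fK => x0 x0K.
have allK y : f y \in Kset T.
  case/connectP: (conn x0 y) => p; elim: p x0 x0K => [|z p IHp] x x0K /=; first by move=> _ ->.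
  move=> /andP [xz pz] ly; apply: (IHp z) => //.
  have [eE me] := edgeK _ _ x0K xz.
  by move/subsetP: (yes _ eE (inT _ eE me)); apply; rewrite !inE eqxx orbT.
move=> e; rewrite {1}Ef /embed => /imsetP [[a b]]; rewrite inE /= => ab ->.
have [eE me] := edgeK _ _ (allK a) ab.
exact: inT.
Qed.

Lemma VE_card k n (Fadj : rel 'I_k) (E : {set {set 'I_n}}) :
  E \in hyp n Fadj -> #|VE E| <= k.
Proof.
move=> /hypP [f [If ->]].
have : VE (embed Fadj f) \subset [set f x | x : 'I_k].
  apply/subsetP => x; rewrite inE => /existsP [e /andP [/imsetP [[a b] _ ->]]].
  by rewrite !inE => /orP [] /eqP ->; apply: imset_f.
move/subset_leq_card => h; apply: leq_trans h _.
by apply: leq_trans (leq_imset_card _ _) _; rewrite card_ord.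
Qed.

Lemma part2 k n (Fadj : rel 'I_k) (G : {set {set 'I_n}}) :
  irreflexive Fadj -> connected_graph Fadj -> simpleb G -> copies Fadj G = set0 ->
  achievable Fadj n ('C(n, 2) - #|G| + k * n).
Proof.
move=> irr conn sG cG.
pose t := build G #|{set 'I_n}|.+1 [::].
have key E : E \in hyp n Fadj -> Inv G E (transcript t E) /\ pol G (transcript t E) = None.
  move=> EH; have := @run_inv n G E #|{set 'I_n}|.+1 [::] isT.
  by rewrite /= => [[H1 H2]]; split => //; apply: H2; rewrite addn0 ltnSn.
exists t; split; first split; first exact: build_pairs.
  have eqT E1 : E1 \in hyp n Fadj -> E1 = [set q | (q, true) \in transcript t E1].
    move=> E1H; have [I pN] := key _ E1H; have cov := cover irr conn cG E1H I pN.
    move: I => /and3P [_ c _].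
    apply/setP => q; rewrite inE; apply/idP/idP => [qE | qT].
      by have := consP c (cov q qE); rewrite qE.
    by move/allP: c => /(_ _ qT) /= /eqP <-.
  by move=> E E' EH E'H Tq; rewrite (eqT _ EH) (eqT _ E'H) Tq.
move=> E EH; have [I pN] := key _ EH.
move: I => /and3P [u _ a].
pose S := [set q : {set 'I_n} | (#|q| == 2) && ((q \notin G) || meets q (VE E))].
have h1 : size (transcript t E) <= #|S|.
  rewrite -(size_map fst) -(card_uniqP u); apply: subset_leq_card.
  by apply/subsetP => q qT; rewrite inE; apply: (allP a).
pose A := [set q : {set 'I_n} | #|q| == 2] :\: G.
pose B := [set [set p.1; p.2] | p in setX (VE E) [set: 'I_n]].
have h2 : S \subset A :|: B.
  apply/subsetP => q; rewrite !inE => /andP [q2 /orP [qG | /existsP [x /andP [xq xV]]]].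
    by rewrite qG q2.
  apply/orP; right; move/cards2P: q2 => [y [z [yz qyz]]].
  move: xq; rewrite qyz !inE => /orP [] /eqP xe.
    by apply/imsetP; exists (y, z) => //; rewrite in_setX -xe xV in_setT.
  by apply/imsetP; exists (z, y); [rewrite in_setX -xe xV in_setT | rewrite /= setUC].
have h3 : #|A| = 'C(n, 2) - #|G|.
  have eI : [set q : {set 'I_n} | #|q| == 2] :&: G = G.
    apply/setP => e; rewrite !inE; case eG: (e \in G); rewrite ?andbT ?andbF //.
    by move/forall_inP: sG; apply.
  by rewrite cardsD eI card_draws card_ord.
have h4 : #|B| <= k * n.
  apply: leq_trans (leq_imset_card _ _) _.
  rewrite cardsX cardsT card_ord leq_mul2r (VE_card EH) orbT //.
have h5 := subset_leq_card h2.
have h6 := leq_card_setU A B.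
apply: leq_trans h1 _; apply: leq_trans h5 _; apply: leq_trans h6 _.
by rewrite h3 leq_add2l.
Qed.

Lemma card_bigcup_le (I T : finType) (A : {pred I}) (B : I -> {set T}) :
  #|\bigcup_(y in A) B y| <= \sum_(y in A) #|B y|.
Proof.
apply: (big_ind2 (fun (X : {set T}) m => #|X| <= m)) => //.
- by rewrite cards0.
- move=> X m Y p h1 h2; apply: leq_trans (leq_card_setU X Y) _.
  exact: leq_add.
Qed.

Section Ball.
Variable n : nat.
Variable G : {set {set 'I_n}}.

Definition adj : rel 'I_n := fun x y => [set x; y] \in G.
Definition deg (x : 'I_n) := #|[set e in G | x \in e]|.
Definition nb (x : 'I_n) : {set 'I_n} := [set y | adj x y].

Lemma adj_sym : symmetric adj.
Proof. by move=> x y; rewrite /adj setUC. Qed.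

Lemma nb_deg x : simpleb G -> #|nb x| <= deg x.
Proof.
move=> sG.
have xx : ~~ adj x x.
  apply/negP => xG; move/forall_inP: sG => /(_ _ xG).
  by rewrite setUid cards1.
rewrite -(@card_in_imset _ _ (fun y => [set x; y])).
  apply: subset_leq_card; apply/subsetP => e /imsetP [y]; rewrite inE => xy ->.
  by rewrite inE set21 andbT; exact: xy.
move=> y1 y2; rewrite !inE => h1 h2 e.
have : y1 \in [set x; y2] by rewrite -e set22.
rewrite !inE => /orP [] /eqP // y1x.
by move: h1 xx; rewrite y1x /adj => ->.
Qed.

Fixpoint ball (r : nat) (x : 'I_n) : {set 'I_n} :=
  match r with
  | 0 => [set x]
  | r'.+1 => ball r' x :|: \bigcup_(y in nb x) ball r' y
  end.

Lemma ball_card d r x : simpleb G -> (forall y, deg y <= d) -> #|ball r x| <= d.+1 ^ r.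
Proof.
move=> sG dG; elim: r x => [|r IH] x /=; first by rewrite cards1.
apply: leq_trans (leq_card_setU _ _) _.
apply: leq_trans (leq_add (IH x) (card_bigcup_le _ _)) _.
have : \sum_(y in nb x) #|ball r y| <= \sum_(y in nb x) d.+1 ^ r by apply: leq_sum => y _; apply: IH.
rewrite sum_nat_const => h.
have h2 : #|nb x| <= d := leq_trans (nb_deg x sG) (dG x).
rewrite expnS.
apply: leq_trans (leq_add (leqnn _) h) _.
rewrite mulSn leq_add2l leq_mul2r h2 orbT //.
Qed.

Lemma ball_S r x : ball r x \subset ball r.+1 x.
Proof. exact: subsetUl. Qed.

Lemma ball_le r s x : r <= s -> ball r x \subset ball s x.
Proof.
move=> /subnK <-; elim: (s - r) => [|m IH] //.
by apply: subset_trans IH (ball_S _ _).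
Qed.

Lemma ball_center r x : x \in ball r x.
Proof.
by move/subsetP: (@ball_le 0 r x (leq0n r)); apply; rewrite /= set11.
Qed.

Lemma ball_path x p : path adj x p -> last x p \in ball (size p) x.
Proof.
elim: p x => [|y p IH] x /=; first by rewrite set11.
move=> /andP [xy py]; rewrite inE; apply/orP; right.
by apply/bigcupP; exists y; [rewrite inE | apply: IH].
Qed.

Lemma ball_end r x y z : y \in ball r x -> adj y z -> z \in ball r.+1 x.
Proof.
elim: r x => [|r IH] x /=.
  rewrite inE => /eqP -> xz; rewrite inE; apply/orP; right.
  by apply/bigcupP; exists z; rewrite ?inE.
rewrite inE => /orP [yb | /bigcupP [w wn yb]] yz.
  by rewrite inE (IH _ yb yz).
rewrite inE; apply/orP; right; apply/bigcupP; exists w => //.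
exact: IH.
Qed.

Lemma ball_sym r x y : y \in ball r x -> x \in ball r y.
Proof.
elim: r x y => [|r IH] x y /=.
  by rewrite !inE eq_sym.
rewrite inE => /orP [yb | /bigcupP [w wn yb]].
  by move/subsetP: (ball_S r y); apply; apply: IH.
apply: (ball_end (IH _ _ yb)).
by move: wn; rewrite inE adj_sym.
Qed.

End Ball.

Lemma cyc_add n (G : {set {set 'I_n}}) u v s :
  u != v -> uniq s -> 3 <= size s -> cycle (adj ([set u; v] |: G)) s ->
  ~~ cycle (adj G) s -> v \in ball G (size s) u.
Proof.
move=> uv us s3 cG' ncG.
have adjU x y : adj ([set u; v] |: G) x y = ([set x; y] == [set u; v]) || adj G x y.
  by rewrite /adj in_setU1.
have inuv x y : [set x; y] = [set u; v] -> x \in [set u; v].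
  by move=> <-; rewrite set21.
have inuv2 x y : [set x; y] = [set u; v] -> y \in [set u; v].
  by move=> <-; rewrite set22.
have inuv3 x y : [set x; y] = [set u; v] -> u \in [set x; y].
  by move=> ->; rewrite set21.
have nu x y : x != u -> y != u -> adj ([set u; v] |: G) x y -> adj G x y.
  move=> xu yu; rewrite adjU => /orP [/eqP e|//].
  move: (inuv3 _ _ e); rewrite !inE => /orP [] /eqP e'.
    by rewrite e' eqxx in xu.
  by rewrite e' eqxx in yu.
have us' : u \in s.
  apply: contraNT ncG => nus.
  apply: (@sub_in_cycle _ [pred x | x != u] (adj ([set u; v] |: G))) cG'.
    by move=> x y; rewrite !inE; apply: nu.
  by apply/allP => x xs; rewrite inE; apply: contraNneq nus => <-.
case: (rot_to us') => i t es.
have ct : cycle (adj ([set u; v] |: G)) (u :: t) by rewrite -es rot_cycle.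
have nct : ~~ cycle (adj G) (u :: t) by rewrite -es rot_cycle.
have ut : uniq (u :: t) by rewrite -es rot_uniq.
have st : size t = (size s).-1 by rewrite -(size_rot i s) es.
have bl : size t <= size s by rewrite st leq_pred.
case: t es ct nct ut st bl => [|a t] _ /=; first by move=> _ _ _ st; move: s3 st; case: (size s) => [|[|[|m]]].
rewrite !rcons_path => /and3P [ua pa bu] nct /andP [uat uniqat] st bl.
have au : a != u by apply: contraNneq uat => ->; rewrite mem_head.
have tu : all [pred x | x != u] (a :: t).
  by apply/allP => x xs; rewrite inE; apply: contraNneq uat => <-.
have paG : path (adj G) a t.
  apply: (@sub_in_path _ [pred x | x != u] (adj ([set u; v] |: G))) pa => //.
  all: try by move=> x y; rewrite !inE; apply: nu.
have bU : last a t != u.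
  by move/allP: tu => /(_ _ (mem_last a t)).
have ua' : ~~ adj G u a -> a = v.
  move=> nua; move: ua; rewrite adjU (negbTE nua) orbF => /eqP /inuv2.
  by rewrite !inE (negbTE au) => /eqP.
have bu' : ~~ adj G (last a t) u -> last a t = v.
  move=> nbu; move: bu; rewrite adjU (negbTE nbu) orbF => /eqP /inuv.
  by rewrite !inE (negbTE bU) => /eqP.
case: (boolP (adj G u a)) => Gua.
  case: (boolP (adj G (last a t) u)) => Gbu.
    by move: nct; rewrite Gua paG Gbu.
  have := ball_path (G := G) (x := u) (p := a :: t); rewrite /= Gua paG /= bu' //.
  move=> /(_ isT) h; exact: (subsetP (@ball_le _ G (size t).+1 (size s) u bl)).
have av := ua' Gua.
case: (boolP (adj G (last a t) u)) => Gbu.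
  have := ball_path (G := G) (x := a) (p := rcons t u).
  rewrite rcons_path paG Gbu last_rcons size_rcons => /(_ isT).
  rewrite av => /ball_sym h; exact: (subsetP (@ball_le _ G (size t).+1 (size s) u bl)).
have := bu' Gbu; rewrite -av => la.
move: uniqat la st; case: (t) => [|c t'] /=; first by move=> _ _ st; move: s3 st; case: (size s) => [|[|[|m]]].
move=> /andP [nat _] la _.
by move: (mem_last c t'); rewrite la (negbTE nat).
Qed.

Definition pb (P : Prop) : bool := if excluded_middle_informative P then true else false.
Lemma pbP P : reflect P (pb P).
Proof. by rewrite /pb; case: excluded_middle_informative => h; constructor. Qed.

Definition nosc n k (G : {set {set 'I_n}}) : Prop :=
  forall s : seq 'I_n, uniq s -> 3 <= size s -> size s <= k -> ~~ cycle (adj G) s.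

Definition good n d k (G : {set {set 'I_n}}) : bool :=
  pb [/\ simpleb G, forall x, deg G x <= d & nosc k G].

Lemma good0 n d k : good d k (set0 : {set {set 'I_n}}).
Proof.
apply/pbP; split.
- by apply/forall_inP => e; rewrite inE.
- move=> x; rewrite /deg; set A := [set _ in _ | _].
  have -> : A = set0 by apply/setP => e; rewrite !inE.
  by rewrite cards0.
- move=> [|x [|y s]] _ //= _ _; rewrite /adj inE //.
Qed.

Lemma max_good n d k : exists2 G : {set {set 'I_n}}, good d k G &
  forall G' : {set {set 'I_n}}, good d k G' -> #|G'| <= #|G|.
Proof.
have h : 0 < #|[pred G : {set {set 'I_n}} | good d k G]|.
  by apply/card_gt0P; exists set0; rewrite inE good0.
case: (eq_bigmax_cond (fun G : {set {set 'I_n}} => #|G|) h) => G0 G0in e.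
exists G0; first by move: G0in; rewrite inE.
move=> G' gG'; rewrite -e.
by apply: leq_bigmax_cond; rewrite inE.
Qed.

Lemma handshake n (G : {set {set 'I_n}}) : simpleb G ->
  \sum_(x : 'I_n) deg G x = 2 * #|G|.
Proof.
move=> sG.
have e1 x : deg G x = \sum_(e in G) (x \in e).
  rewrite /deg -sum1_card (eq_bigl (fun e => (e \in G) && (x \in e))); last first.
    by move=> e; rewrite inE.
  by rewrite big_mkcondr; apply: eq_bigr => e _; case: (x \in e).
have e2 (e : {set 'I_n}) : \sum_(x : 'I_n) (x \in e) = #|e|.
  by rewrite -sum1_card [RHS]big_mkcond /=; apply: eq_bigr => x _; case: (x \in e).
rewrite (eq_bigr _ (fun x _ => e1 x)) exchange_big /=.
rewrite (eq_bigr (fun _ => 2)) ?sum_nat_const 1?mulnC //.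
by move=> e eG; rewrite e2; move/forall_inP: sG => /(_ _ eG) /eqP.
Qed.

Lemma defic n d k (G : {set {set 'I_n}}) u v : 1 <= k -> good d k G ->
  (forall G' : {set {set 'I_n}}, good d k G' -> #|G'| <= #|G|) ->
  deg G u < d -> deg G v < d -> v \in ball G k u.
Proof.
move=> k1 gG mx du dv.
move/pbP: (gG) => [sG dG nG].
case: (eqVneq u v) => [<-|uv]; first exact: ball_center.
case: (boolP (adj G u v)) => auv.
  have := ball_path (G := G) (x := u) (p := [:: v]); rewrite /= auv => /(_ isT) h.
  exact: (subsetP (@ball_le _ G 1 k u k1)).
pose G' := [set u; v] |: G.
case: (classic (nosc k G')) => [nG'|nn].
  have gG' : good d k G'.
    apply/pbP; split => //.
      apply/forall_inP => e; rewrite in_setU1 => /orP [/eqP ->|eG].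
        by rewrite cards2 uv.
      by move/forall_inP: sG; apply.
    move=> w; rewrite /deg.
    case: (boolP (w \in [set u; v])) => wuv.
      have sub : [set e in G' | w \in e] \subset [set u; v] |: [set e in G | w \in e].
        apply/subsetP => e; rewrite !inE => /andP [/orP [->|eG] we] //.
        by rewrite eG we orbT.
      apply: leq_trans (subset_leq_card sub) _; rewrite cardsU1.
      have : deg G w < d by move: wuv; rewrite !inE => /orP [] /eqP ->.
      by move=> h; apply: leq_trans (leq_add (leq_b1 _) (leqnn _)) _; rewrite add1n; exact: h.
    have sub : [set e in G' | w \in e] \subset [set e in G | w \in e].
      apply/subsetP => e; rewrite !inE => /andP [/orP [/eqP ee|eG] we].
        by move: wuv; rewrite -ee we.
      by rewrite eG we.
    exact: leq_trans (subset_leq_card sub) (dG w).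
  have := mx _ gG'; rewrite /G' cardsU1.
  have -> : [set u; v] \notin G by exact: auv.
  by rewrite add1n ltnn.
have [s [us [s3 [sk cs]]]] : exists s, [/\ uniq s, 3 <= size s, size s <= k & cycle (adj G') s].
  apply: NNPP => hn; apply: nn => s us s3 sk; apply/negP => cs; apply: hn.
  by exists s.
have := cyc_add uv us s3 cs (nG s us s3 sk).
exact: (subsetP (@ball_le _ G (size s) k u sk)).
Qed.

Lemma es_bound n d k : 1 <= k -> exists2 G : {set {set 'I_n}}, good d k G &
  d * (n - d.+1 ^ k) <= 2 * #|G|.
Proof.
move=> k1; case: (max_good n d k) => G gG mx; exists G => //.
move/pbP: (gG) => [sG dG nG].
pose D := [set x | deg G x < d].
have Db : #|D| <= d.+1 ^ k.
  case: (set_0Vmem D) => [->|[u uD]]; first by rewrite cards0.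
  have : D \subset ball G k u.
    apply/subsetP => v vD; rewrite /D !inE in uD vD; exact: (defic k1 gG mx uD vD).
  move/subset_leq_card => h; exact: leq_trans h (ball_card _ _ sG dG).
rewrite -handshake //.
have h1 : \sum_(x : 'I_n) (if x \in D then 0 else d) <= \sum_(x : 'I_n) deg G x.
  apply: leq_sum => x _; case: ifP => //; rewrite /D inE => /negbT.
  by rewrite -leqNgt.
have h2 : \sum_(x : 'I_n) (if x \in D then 0 else d) = #|~: D| * d.
  rewrite -sum_nat_const [RHS]big_mkcond /=; apply: eq_bigr => x _.
  by rewrite in_setC; case: (x \in D).
have h3 : #|~: D| = n - #|D|.
  have e := cardsC D; rewrite card_ord in e; move: e; set a := #|~: D|; set b := #|D|; lia.
apply: leq_trans _ h1; rewrite h2 h3 mulnC leq_mul2r; apply/orP; right.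
by apply: leq_sub2l.
Qed.

Lemma ex_lower k n (Fadj : rel 'I_k) d : connected_graph Fadj -> ~ is_tree Fadj ->
  1 <= k -> d * (n - d.+1 ^ k) <= 2 * ex Fadj n.
Proof.
move=> conn ntree k1.
have [s [us s3 cs]] : exists s : seq 'I_k, [/\ uniq s, 3 <= size s & cycle Fadj s].
  apply: NNPP => hn; apply: ntree; split => //.
have sk : size s <= k by rewrite -(card_uniqP us); apply: leq_trans (max_card _) _; rewrite card_ord.
case: (es_bound n d k1) => G gG hG.
move/pbP: (gG) => [sG dG nG].
have cG : copies Fadj G = set0.
  apply/setP => E; rewrite inE [RHS]inE; apply/negbTE/negP => /andP [EH EG].
  move/hypP: EH => [f [If Ef]].
  have := nG (map f s); rewrite map_inj_uniq // size_map => /(_ us s3 sk).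
  rewrite cycle_map; apply/negP/negPn.
  apply: sub_cycle cs => a b ab /=; rewrite /adj.
  move/subsetP: EG; apply; rewrite Ef /embed; apply/imsetP; exists (a, b) => //.
  by rewrite inE.
have : #|G| <= ex Fadj n.
  by rewrite /ex; apply: leq_bigmax_cond; rewrite sG cG eqxx.
move=> h; apply: leq_trans hG _; rewrite leq_mul2l h orbT //.
Qed.

Lemma L_spec k n (Fadj : rel 'I_k) : (exists d, achievable Fadj n d) ->
  achievable Fadj n (L Fadj n) /\ forall d', achievable Fadj n d' -> L Fadj n <= d'.
Proof.
move=> ex0; rewrite /L.
apply: (epsilon_spec (inhabits 0) (fun d => achievable Fadj n d /\ forall d', achievable Fadj n d' -> d <= d')).
have exP : exists d, pb (achievable Fadj n d).
  by case: ex0 => d hd; exists d; apply/pbP.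
case: (ex_minnP exP) => m /pbP hm hmin; exists m; split => // d' hd'.
by apply: hmin; apply/pbP.
Qed.

Lemma F_edge k (Fadj : rel 'I_k) : connected_graph Fadj -> 2 <= k ->
  exists a b, Fadj a b.
Proof.
move=> conn k2.
pose a : 'I_k := Ordinal (ltnW k2). pose b : 'I_k := Ordinal k2.
case/connectP: (conn a b) => [[|c p]] /=.
  by move=> _ /(congr1 val).
by move=> /andP [ac _] _; exists a, c.
Qed.

Lemma hyp_nonempty k n (Fadj : rel 'I_k) E : connected_graph Fadj -> 2 <= k ->
  E \in hyp n Fadj -> exists e, e \in E.
Proof.
move=> conn k2 /hypP [f [If ->]]; case: (F_edge conn k2) => a [b ab].
by exists [set f a; f b]; rewrite /embed; apply/imsetP; exists (a, b); rewrite // inE.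
Qed.

Lemma ex_attained k n (Fadj : rel 'I_k) : connected_graph Fadj -> 2 <= k ->
  exists G : {set {set 'I_n}}, [/\ simpleb G, copies Fadj G = set0 & #|G| = ex Fadj n].
Proof.
move=> conn k2.
have h : 0 < #|[pred G : {set {set 'I_n}} | simpleb G && (copies Fadj G == set0)]|.
  apply/card_gt0P; exists set0; rewrite inE; apply/andP; split.
    by apply/forall_inP => e; rewrite inE.
  apply/eqP/setP => E; rewrite inE [RHS]inE; apply/negbTE/negP => /andP [EH].
  case: (hyp_nonempty conn k2 EH) => e eE /subsetP /(_ e eE).
  by rewrite inE.
case: (eq_bigmax_cond (fun G : {set {set 'I_n}} => #|G|) h) => G0 G0in e.
move: G0in; rewrite inE => /andP [s0 /eqP c0].
by exists G0; split => //; rewrite /ex -e.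
Qed.

Lemma ex_le k n (Fadj : rel 'I_k) : ex Fadj n <= 'C(n, 2).
Proof.
apply/bigmax_leqP => G /andP [sG _].
have := card_draws 'I_n 2; rewrite card_ord => <-.
apply: subset_leq_card; apply/subsetP => e eG.
by rewrite inE; move/forall_inP: sG; apply.
Qed.

Lemma exa1_le k n (Fadj : rel 'I_k) : irreflexive Fadj -> connected_graph Fadj -> 2 <= k ->
  exa1 Fadj n <= (ex Fadj n).+1.
Proof.
move=> irr conn k2.
apply/bigmax_leqP => G /andP [sG /cards1P [H cH]].
have HG : H \in copies Fadj G by rewrite cH set11.
move: (HG); rewrite inE => /andP [HH /subsetP HsG].
case: (hyp_nonempty conn k2 HH) => e eH.
pose G' := G :\ e.
have sG' : simpleb G'.
  by apply/forall_inP => x; rewrite !inE => /andP [_ xG]; move/forall_inP: sG; apply.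
have cG' : copies Fadj G' = set0.
  apply/setP => E; rewrite inE [RHS]inE; apply/negbTE/negP => /andP [EH EG'].
  have : E \in copies Fadj G.
    rewrite inE EH /=; apply: subset_trans EG' _; exact: subsetDl.
  rewrite cH inE => /eqP EHe; move/subsetP: EG' => /(_ e); rewrite EHe => /(_ eH).
  by rewrite !inE eqxx.
have : #|G'| <= ex Fadj n.
  by rewrite /ex; apply: leq_bigmax_cond; rewrite sG' cG' eqxx.
by rewrite /G' (cardsD1 e G) (HsG e eH) add1n.
Qed.

Import GRing.Theory Num.Theory.
Local Open Scope ring_scope.
Lemma eps_bound (eps : rat) : (0 < eps)%R -> exists D : nat, (1 <= eps * D%:R)%R.
Proof.
move=> e0; exists `|denq eps|%N.
have -> : (`|denq eps|%N)%:R = (denq eps)%:~R :> rat.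
  by rewrite natr_absz gtr0_norm // denq_gt0.
rewrite -{1}(divq_num_den eps) GRing.divfK; last by rewrite intr_eq0 (Order.POrderTheory.gt_eqF (denq_gt0 _)).
rewrite ler1z; have := numq_gt0 eps; rewrite e0; exact.
Qed.

Unset Implicit Arguments.
Import Order.TTheory GRing.Theory Num.Theory.
Local Open Scope ring_scope.

Theorem proposition4p1 (k : nat) (Fadj : rel 'I_k) :
  symmetric Fadj -> irreflexive Fadj -> connected_graph Fadj -> (2 <= k)%N ->
  (exists N : nat, forall n : nat, (N <= n)%N ->
      ('C(n, 2) <= L Fadj n + exa1 Fadj n)%N) /\
  (exists C N : nat, forall n : nat, (N <= n)%N ->
      (L Fadj n + exa1 Fadj n <= 'C(n, 2) + C * n)%N) /\
  (~ is_tree Fadj ->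
     forall eps : rat, 0 < eps ->
     exists N : nat, forall n : nat, (N <= n)%N ->
       `| (('C(n, 2))%:R - (L Fadj n)%:R - (ex Fadj n)%:R : rat) | <=
          eps * (ex Fadj n)%:R).
Proof.
move=> sym irr conn k2.
have k1 : (1 <= k)%N by apply: leq_trans k2.
have ach n : exists d, achievable Fadj n d.
  case: (ex_attained n conn k2) => G [sG cG _].
  by exists ('C(n, 2) - #|G| + k * n)%N; exact: part2.
have Lub n : (L Fadj n + ex Fadj n <= 'C(n, 2) + k * n)%N.
  case: (ex_attained n conn k2) => G [sG cG eG].
  have := (L_spec (ach n)).2 _ (part2 irr conn sG cG); rewrite eG.
  have := ex_le n Fadj; lia.
have Llb n : (k <= n)%N -> ('C(n, 2) <= L Fadj n + exa1 Fadj n)%N.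
  by move=> kn; apply: part1 irr kn (L_spec (ach n)).1.
have Ea n := exa1_le n irr conn k2.
split; [|split].
- by exists k.
- exists k.+1, 1%N => n n1; have := Lub n; have := Ea n; lia.
move=> ntree eps e0.
case: (eps_bound e0) => D hD.
pose d := (4 * k.+1 * D)%N.
exists (maxn k (maxn 1 (2 * d.+1 ^ k))) => n.
rewrite !geq_max => /and3P [kn n1 nb].
have hl := Llb n kn; have hu := Lub n; have he := Ea n.
have hx := ex_lower n d conn ntree k1.
have hdn : (d * n <= 4 * ex Fadj n)%N.
  have h2 : (n <= 2 * (n - d.+1 ^ k))%N by lia.
  apply: leq_trans (leq_mul (leqnn d) h2) _.
  rewrite mulnCA (_ : 4 = 2 * 2)%N // -mulnA leq_mul2l /=; exact: hx.
have r1 : ('C(n, 2))%:R <= (L Fadj n)%:R + (ex Fadj n)%:R + 1 :> rat.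
  by rewrite -natrD natr1 ler_nat; lia.
have r2 : (L Fadj n)%:R + (ex Fadj n)%:R <= ('C(n, 2))%:R + k%:R * n%:R :> rat.
  by rewrite -natrD -natrM -natrD ler_nat.
have r3 : 4%:R * k.+1%:R * D%:R * n%:R <= 4 * (ex Fadj n)%:R :> rat.
  by rewrite -!natrM ler_nat.
have r4 : 1 <= n%:R :> rat by rewrite ler1n.
have r5 : 4%:R * k.+1%:R * n%:R <= eps * (4%:R * k.+1%:R * D%:R * n%:R) :> rat.
  rewrite (_ : eps * _ = (eps * D%:R) * (4%:R * k.+1%:R * n%:R)); last by ring.
  by apply: ler_peMl => //; rewrite !mulr_ge0.
have r6 : eps * (4%:R * k.+1%:R * D%:R * n%:R) <= eps * (4 * (ex Fadj n)%:R) :> rat.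
  by rewrite ler_pM2l.
have rk : k%:R * n%:R + n%:R <= eps * (ex Fadj n)%:R :> rat.
  have := le_trans r5 r6.
  rewrite (_ : 4%:R * k.+1%:R * n%:R = 4 * (k%:R * n%:R + n%:R)); last by rewrite -natr1; ring.
  rewrite (_ : eps * (4 * (ex Fadj n)%:R) = 4 * (eps * (ex Fadj n)%:R)); last by ring.
  by rewrite ler_pM2l.
have hKN : 0 <= k%:R * n%:R :> rat by rewrite mulr_ge0.
move: rk r1 r2 r4 hKN; set E := eps * (ex Fadj n)%:R; set KN := k%:R * n%:R.
move=> rk r1 r2 r4 hKN.
rewrite ler_norml; apply/andP; split; lra.
Qed.
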